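(* Let $\lambda_1,\lambda_2$ be real numbers with $\lambda_1\neq\lambda_2$, and let $\mathfrak g$ be the real Lie algebra with basis $\{X_1,X_2,X_3,X_4\}$ whose only nonzero brackets (up to antisymmetry) are $\{X_1,X_2\}=\lambda_1X_2$, $\{X_1,X_3\}=\lambda_2X_3$, $\{X_1,X_4\}=-(\lambda_1+\lambda_2)X_4$. Write $\delta=\lambda_1-\lambda_2$, $a=2\lambda_1+\lambda_2$, $b=\lambda_1+2\lambda_2$. For $t>0$ let $K_t$ be the linear map whose matrix with respect to the ordered basis $(X_1,\dots,X_4)$ (with the $j$-th column giving the coordinates of $K_tX_j$) is \[ K_t=\begin{bmatrix} 1 & \frac1t & \frac{2b}{\delta t} & 0\\[3pt] -\frac{2at}{\delta} & -\frac{a}{\delta} & -\frac{2ab}{\delta^2} & \frac{b}{\delta t}\\[3pt] t & \frac12 & \frac{b}{\delta} & -\frac{1}{2t}\\[3pt] 0 & t & \frac{2at}{\delta} & 0 \end{bmatrix}. \] Then $K_t^2=-\mathrm{id}$ for every $t>0$, and the Nijenhuis tensor $N_t$ of $K_t$ is given by \begin{align*} N_t(X_1,X_2)&=\tfrac{b}{t}X_1,\qquad N_t(X_1,X_3)=\tfrac{2ab}{\delta t}X_1,\\ N_t(X_1,X_4)&=-\tfrac{b}{t^2}X_1+\tfrac{2ab}{\delta t}X_2-\tfrac{b}{t}X_3,\\ N_t(X_2,X_3)&=\tfrac{2b}{t^2}X_1-\tfrac{2ab}{\delta t}X_2+\tfrac{b}{t}X_3,\\ N_t(X_2,X_4)&=\tfrac{ab}{\delta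 t^2}X_2-\tfrac{b}{2t^2}X_3,\\ N_t(X_3,X_4)&=\tfrac{2ab^2}{\delta^2t^2}X_2-\tfrac{b^2}{\delta t^2}X_3. \end{align*} In particular $N_t\to0$ as $t\to\infty$. Consequently, if $A\in SL(3,\mathbb Z)$ has three distinct positive real eigenvalues $e^{\lambda_1},e^{\lambda_2},e^{-(\lambda_1+\lambda_2)}$, $A=VDV^{-1}$ with $D$ diagonal, $G=\mathbb R^3\rtimes_\phi\mathbb R$ with $\phi_s=\exp(s\log A)$ and $\Gamma=\mathbb Z^3\rtimes_\phi\mathbb Z$, then conjugating $K_t$ by $V$ as described gives left-invariant almost complex structures $J_t$ on $\Gamma\backslash G$ whose Nijenhuis tensors tend to $0$ in the $C^0$-norm.
   Context: The Nijenhuis tensor of a linear endomorphism $J$ of a Lie algebra with $J^2=-\mathrm{id}$ is $N_J(X,Y)=[X,Y]+J[JX,Y]+J[X,JY]-[JX,JY]$ (here with bracket $\{\cdot,\cdot\}$); it is skew-symmetric and bilinear. The bracket $\{\cdot,\cdot\}$ arises as the transport $V^{-1}\circ[V(\cdot),V(\cdot)]$ of the Lie bracket of $\mathbb R^3\rtimes_\phi\mathbb R$ (whose nonzero brackets in the standard basis $E_1,\dots,E_4$ are $[E_1,E_i]=(\log A)E_i$, $i=2,3,4$), with $X_1$ the standard generator of $\mathbb R$ and $X_2,X_3,X_4$ the corresponding eigenvector basis; $J_t:=V^{-1}K_tV$. *)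

(* Defs.v *)
From mathcomp Require Import all_boot all_order all_algebra.
From mathcomp Require Import all_classical all_reals all_analysis.
Set Implicit Arguments. Unset Strict Implicit. Unset Printing Implicit Defensive.
Import Order.TTheory GRing.Theory Num.Theory.
Local Open Scope ring_scope.

(* Indices of the ordered basis (X_1,...,X_4) : coordinates 0..3 *)
Definition i0 : 'I_4 := @Ordinal 4 0 isT.
Definition i1 : 'I_4 := @Ordinal 4 1 isT.
Definition i2 : 'I_4 := @Ordinal 4 2 isT.
Definition i3 : 'I_4 := @Ordinal 4 3 isT.

Definition e {R : realType} (i : 'I_4) : 'cV[R]_4 := delta_mx i 0.

Definition brg {R : realType} (l1 l2 : R) (x y : 'cV[R]_4) : 'cV[R]_4 :=
  (l1 * (x i0 0 * y i1 0 - x i1 0 * y i0 0)) *: e i1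
+ (l2 * (x i0 0 * y i2 0 - x i2 0 * y i0 0)) *: e i2
+ (- (l1 + l2) * (x i0 0 * y i3 0 - x i3 0 * y i0 0)) *: e i3.

Definition nijenhuis {R : realType} (br : 'cV[R]_4 -> 'cV[R]_4 -> 'cV[R]_4)
  (J : 'M[R]_4) (x y : 'cV[R]_4) : 'cV[R]_4 :=
  br (J *m x) (J *m y) - J *m br (J *m x) y - J *m br x (J *m y) - br x y.

(* The matrix K_t (column j = coordinates of K_t X_{j+1}) *)
Definition Kt {R : realType} (l1 l2 t : R) : 'M[R]_4 :=
  let d := l1 - l2 in
  let a := 2 * l1 + l2 in
  let b := l1 + 2 * l2 in
  \matrix_(i < 4, j < 4) nth 0 (nth [::] [::
     [:: 1; 1 / t; 2 * b / (d * t); 0];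
     [:: - (2 * a * t) / d; - a / d; - (2 * a * b) / (d ^+ 2); b / (d * t)];
     [:: t; 1 / 2; b / d; - 1 / (2 * t)];
     [:: 0; t; 2 * a * t / d; 0]] i) j.

(* The Lie algebra of G = R^3 x|_phi R, phi_s = exp(s log A), in the basis
   (E_1,...,E_4), E_1 the generator of R: [E_1, w] = (log A) w for w in R^3,
   and R^3 abelian. *)
Definition brG {R : realType} (L : 'M[R]_3) (x y : 'cV[R]_4) : 'cV[R]_4 :=
  @col_mx R 1 3 1 0
    (L *m (x i0 0 *: @dsubmx R 1 3 1 y - y i0 0 *: @dsubmx R 1 3 1 x)).

Definition diag3 {R : realType} (d1 d2 d3 : R) : 'M[R]_3 :=
  diag_mx (\row_(i < 3) nth 0 [:: d1; d2; d3] i).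

(* change of basis from (X_1,..,X_4) to (E_1, v_1, v_2, v_3), columns of V3
   being eigenvectors of A *)
Definition Pmat {R : realType} (V3 : 'M[R]_3) : 'M[R]_4 :=
  @block_mx R 1 3 1 3 1 0 0 V3.

(* Main.v *)
Require Import Defs.
From mathcomp Require Import all_boot all_order all_algebra.
From mathcomp Require Import all_classical all_reals all_analysis.
From mathcomp Require Import ring lra.
Import Order.TTheory GRing.Theory Num.Theory.
Import numFieldNormedType.Exports.
Local Open Scope classical_set_scope.
Local Open Scope ring_scope.
Definition cv4 {R : realType} (a0 a1 a2 a3 : R) : 'cV[R]_4 :=
  \col_(k < 4) nth 0 [:: a0; a1; a2; a3] k.

Lemma cv4E {R : realType} (x : 'cV[R]_4) : x = cv4 (x i0 0) (x i1 0) (x i2 0) (x i3 0).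
Proof.
apply/matrixP => i j; rewrite !mxE ord1.
case: i => [[|[|[|[|i]]]] Hi] //=; congr (x _ _); exact: val_inj.
Qed.

Section C.
Variable R : realType.
Implicit Types a b : R.
Lemma cv4D a0 a1 a2 a3 b0 b1 b2 b3 :
  cv4 a0 a1 a2 a3 + cv4 b0 b1 b2 b3 = cv4 (a0+b0) (a1+b1) (a2+b2) (a3+b3) :> 'cV[R]_4.
Proof. by apply/matrixP => i j; rewrite !mxE; case: i => [[|[|[|[|i]]]] Hi]. Qed.
Lemma cv4N a0 a1 a2 a3 :
  - cv4 a0 a1 a2 a3 = cv4 (-a0) (-a1) (-a2) (-a3) :> 'cV[R]_4.
Proof. by apply/matrixP => i j; rewrite !mxE; case: i => [[|[|[|[|i]]]] Hi]. Qed.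
Lemma cv4Z c a0 a1 a2 a3 :
  c *: cv4 a0 a1 a2 a3 = cv4 (c*a0) (c*a1) (c*a2) (c*a3) :> 'cV[R]_4.
Proof. by apply/matrixP => i j; rewrite !mxE; case: i => [[|[|[|[|i]]]] Hi]. Qed.
Lemma cv4_e0 : e i0 = cv4 1 0 0 0 :> 'cV[R]_4.
Proof. by apply/matrixP => i j; rewrite !mxE ord1; case: i => [[|[|[|[|i]]]] Hi]. Qed.
Lemma cv4_e1 : e i1 = cv4 0 1 0 0 :> 'cV[R]_4.
Proof. by apply/matrixP => i j; rewrite !mxE ord1; case: i => [[|[|[|[|i]]]] Hi]. Qed.
Lemma cv4_e2 : e i2 = cv4 0 0 1 0 :> 'cV[R]_4.
Proof. by apply/matrixP => i j; rewrite !mxE ord1; case: i => [[|[|[|[|i]]]] Hi]. Qed.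
Lemma cv4_e3 : e i3 = cv4 0 0 0 1 :> 'cV[R]_4.
Proof. by apply/matrixP => i j; rewrite !mxE ord1; case: i => [[|[|[|[|i]]]] Hi]. Qed.
Lemma cv4_eq a0 a1 a2 a3 b0 b1 b2 b3 : a0 = b0 -> a1 = b1 -> a2 = b2 -> a3 = b3 ->
  cv4 a0 a1 a2 a3 = cv4 b0 b1 b2 b3 :> 'cV[R]_4.
Proof. by move=> -> -> -> ->. Qed.
Lemma brg_cv4 l1 l2 a0 a1 a2 a3 b0 b1 b2 b3 :
  brg l1 l2 (cv4 a0 a1 a2 a3) (cv4 b0 b1 b2 b3) =
  cv4 0 (l1 * (a0 * b1 - a1 * b0)) (l2 * (a0 * b2 - a2 * b0))
      (- (l1 + l2) * (a0 * b3 - a3 * b0)).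
Proof.
rewrite /brg cv4_e1 cv4_e2 cv4_e3 !cv4Z !cv4D.
rewrite /cv4 !mxE /=; apply: cv4_eq; ring.
Qed.
Lemma mulmx_cv4 (M : 'M[R]_4) a0 a1 a2 a3 :
  M *m cv4 a0 a1 a2 a3 =
  cv4 (M i0 i0 * a0 + M i0 i1 * a1 + M i0 i2 * a2 + M i0 i3 * a3)
      (M i1 i0 * a0 + M i1 i1 * a1 + M i1 i2 * a2 + M i1 i3 * a3)
      (M i2 i0 * a0 + M i2 i1 * a1 + M i2 i2 * a2 + M i2 i3 * a3)
      (M i3 i0 * a0 + M i3 i1 * a1 + M i3 i2 * a2 + M i3 i3 * a3).
Proof.
apply/matrixP => i j; rewrite !mxE !big_ord_recr big_ord0 /= !mxE /= add0r.
case: i => [[|[|[|[|i]]]] Hi] //=; rewrite ?addrA;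
 repeat congr (_ + _); congr (_ * _); congr (M _ _); exact: val_inj.
Qed.
End C.
Definition V1 {R : realType} (l1 l2 : R) (x y : 'cV[R]_4) : 'cV[R]_4 :=
  let d := l1 - l2 in let a := 2 * l1 + l2 in let b := l1 + 2 * l2 in
  let w i j := x i 0 * y j 0 - x j 0 * y i 0 in
  cv4 (b * w i0 i1 + 2*a*b/d * w i0 i2) (2*a*b/d * w i0 i3 - 2*a*b/d * w i1 i2)
      (- b * w i0 i3 + b * w i1 i2) 0.
Definition V2 {R : realType} (l1 l2 : R) (x y : 'cV[R]_4) : 'cV[R]_4 :=
  let d := l1 - l2 in let a := 2 * l1 + l2 in let b := l1 + 2 * l2 in
  let w i j := x i 0 * y j 0 - x j 0 * y i 0 in
  cv4 (- b * w i0 i3 + 2 * b * w i1 i2) (a*b/d * w i1 i3 + 2*a*b^+2/d^+2 * w i2 i3)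
      (- b / 2 * w i1 i3 - b^+2/d * w i2 i3) 0.

Lemma Nform (R : realType) (l1 l2 t : R) (x y : 'cV[R]_4) : l1 != l2 -> t != 0 ->
  nijenhuis (brg l1 l2) (Kt l1 l2 t) x y = t^-1 *: V1 l1 l2 x y + (t^-1)^+2 *: V2 l1 l2 x y.
Proof.
move=> hl ht.
have hd : l1 - l2 != 0 by rewrite subr_eq0.
rewrite [x]cv4E [y]cv4E.
move: (x i0 0) (x i1 0) (x i2 0) (x i3 0) (y i0 0) (y i1 0) (y i2 0) (y i3 0)
  => x0 x1 x2 x3 y0 y1 y2 y3.
rewrite /nijenhuis !mulmx_cv4 !brg_cv4 !mulmx_cv4 !cv4N !cv4D /V1 /V2 !cv4Z !cv4D.
rewrite /Kt /cv4 !mxE /=.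
Time apply: cv4_eq; field; by rewrite ?hd ?ht.
Qed.
Lemma inv_cvg0 (R : realType) : (fun t : R => t^-1) @ +oo --> (0:R).
Proof.
have Hp : \forall x \near (+oo : set_system R), 0 < x.
  by apply: nbhs_pinfty_gt; exact: real0.
have H := @gtr0_cvgV0 R R _ _ (@id R) Hp.
exact: (proj2 (H _) cvg_id). Qed.

Lemma lim_inv (R : realType) (c1 c2 : R) (f : R -> R) :
  (\forall t \near +oo, c1 * t^-1 + c2 * t^-1^+2 = f t) -> f t @[t --> +oo] --> (0:R).
Proof.
move=> H; apply: cvg_trans (near_eq_cvg H) _.
have -> : (0:R) = c1 * 0 + c2 * 0 ^+ 2 by rewrite expr2 !mulr0 addr0.
apply: cvgD; apply: cvgM; try exact: cvg_cst; [exact: inv_cvg0|].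
rewrite expr2; apply: cvgM; exact: inv_cvg0.
Qed.
Lemma Ksq (R : realType) (l1 l2 t : R) : l1 != l2 -> t != 0 ->
  Kt l1 l2 t *m Kt l1 l2 t = - 1%:M.
Proof.
move=> hl ht.
have hd : l1 - l2 != 0 by rewrite subr_eq0.
apply/matrixP => i j; rewrite !mxE !big_ord_recr big_ord0 /= /Kt !mxE /=.
case: i => [[|[|[|[|i]]]] Hi] //=; case: j => [[|[|[|[|j]]]] Hj] //=;
  field; by rewrite ?hd ?ht.
Qed.

Lemma brg_block (R : realType) (l1 l2 : R) (u v : 'cV[R]_4) :
  brg l1 l2 u v = @col_mx R 1 3 1 0
    (diag3 l1 l2 (- (l1 + l2)) *m (u i0 0 *: @dsubmx R 1 3 1 v - v i0 0 *: @dsubmx R 1 3 1 u)).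
Proof.
rewrite [u]cv4E [v]cv4E.
move: (u i0 0) (u i1 0) (u i2 0) (u i3 0) (v i0 0) (v i1 0) (v i2 0) (v i3 0)
  => x0 x1 x2 x3 y0 y1 y2 y3.
transitivity (@col_mx R 1 3 1 (@usubmx R 1 3 1 (brg l1 l2 (cv4 x0 x1 x2 x3) (cv4 y0 y1 y2 y3))) (@dsubmx R 1 3 1 (brg l1 l2 (cv4 x0 x1 x2 x3) (cv4 y0 y1 y2 y3))));
  first by rewrite vsubmxK.
apply: (f_equal2 (@col_mx R 1 3 1)); apply/matrixP => i j; rewrite ord1.
  by rewrite ord1 /brg /e !mxE /= !mulr0 !addr0.
rewrite /brg /e /diag3 !mxE !big_ord_recr big_ord0 /= !mxE /=.
case: i => [[|[|[|i]]] Hi] //=; rewrite ?mxE /= ?mulr1n ?mulr0n; ring.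
Qed.

Lemma addZE (R : realType) (s1 s2 : R) (M1 M2 : 'cV[R]_4) k j :
  (s1 *: M1 + s2 *: M2) k j = M1 k j * s1 + M2 k j * s2.
Proof. by rewrite !mxE mulrC (mulrC s2). Qed.

Lemma Pmat_unit (R : realType) (V3 : 'M[R]_3) : V3 \in unitmx -> Pmat V3 \in unitmx.
Proof.
move=> hV; rewrite unitmxE /Pmat.
have := det_ublock (1%:M : 'M[R]_1) 0 V3.
rewrite /= => ->; by rewrite det1 mul1r -unitmxE.
Qed.

Lemma Pmat_col (R : realType) (V3 : 'M[R]_3) (p : 'cV[R]_1) (q : 'cV[R]_3) :
  Pmat V3 *m @col_mx R 1 3 1 p q = col_mx p (V3 *m q).
Proof.
have H := mul_block_col (1 : 'M[R]_1) (0 : 'M[R]_(1,3)) (0 : 'M[R]_(3,1)) V3 p q.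
rewrite mul1mx !mul0mx addr0 add0r in H.
exact: H.
Qed.

Lemma Pmat_u (R : realType) (V3 : 'M[R]_3) (u : 'cV[R]_4) :
  Pmat V3 *m u = col_mx (@usubmx R 1 3 1 u) (V3 *m @dsubmx R 1 3 1 u).
Proof.
rewrite -Pmat_col.
by transitivity (Pmat V3 *m (@col_mx R 1 3 1 (@usubmx R 1 3 1 u) (@dsubmx R 1 3 1 u)));
  [rewrite vsubmxK|].
Qed.

Lemma col_i0 (R : realType) (p : 'cV[R]_1) (q : 'cV[R]_3) :
  (@col_mx R 1 3 1 p q : 'cV[R]_4) i0 0 = p 0 0.
Proof.
have -> : i0 = lshift 3 (0 : 'I_1) by apply: val_inj.
exact: (col_mxEu p q 0 0).
Qed.

Lemma usub_i0 (R : realType) (u : 'cV[R]_4) : (@usubmx R 1 3 1 u) 0 0 = u i0 0.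
Proof. by rewrite mxE; congr (u _ _); apply: val_inj. Qed.

Lemma brG_brg (R : realType) (l1 l2 : R) (V3 : 'M[R]_3) : V3 \in unitmx ->
  forall u v, Pmat V3 *m brg l1 l2 u v =
   brG (V3 *m diag3 l1 l2 (- (l1 + l2)) *m invmx V3) (Pmat V3 *m u) (Pmat V3 *m v).
Proof.
move=> hV u v.
rewrite brg_block Pmat_col !Pmat_u /brG !col_i0 !usub_i0.
apply: (f_equal2 (@col_mx R 1 3 1)); first by [].
rewrite (col_mxKd (@usubmx R 1 3 1 v) (V3 *m @dsubmx R 1 3 1 v)) (col_mxKd (@usubmx R 1 3 1 u) (V3 *m @dsubmx R 1 3 1 u)).
by rewrite !scalemxAr -mulmxBr !mulmxA mulmxKV.
Qed.

Theorem mainTheorem4 (R : realType) (l1 l2 : R) (hl : l1 != l2) :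
  let d := l1 - l2 in
  let a := 2 * l1 + l2 in
  let b := l1 + 2 * l2 in
  let N := fun t => nijenhuis (brg l1 l2) (Kt l1 l2 t) in
  (forall t : R, 0 < t ->
     Kt l1 l2 t *m Kt l1 l2 t = - 1%:M
  /\ N t (e i0) (e i1) = (b / t) *: e i0
  /\ N t (e i0) (e i2) = (2 * a * b / (d * t)) *: e i0
  /\ N t (e i0) (e i3) = (- b / t ^+ 2) *: e i0 + (2 * a * b / (d * t)) *: e i1
                          - (b / t) *: e i2
  /\ N t (e i1) (e i2) = (2 * b / t ^+ 2) *: e i0 - (2 * a * b / (d * t)) *: e i1
                          + (b / t) *: e i2
  /\ N t (e i1) (e i3) = (a * b / (d * t ^+ 2)) *: e i1 - (b / (2 * t ^+ 2)) *: e i2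
  /\ N t (e i2) (e i3) = (2 * a * b ^+ 2 / (d ^+ 2 * t ^+ 2)) *: e i1
                          - (b ^+ 2 / (d * t ^+ 2)) *: e i2)
  /\ (forall (x y : 'cV[R]_4) (k : 'I_4), N t x y k 0 @[t --> +oo] --> 0)
  /\ (forall (A : 'M[int]_3) (V3 : 'M[R]_3),
        \det A = 1 ->
        V3 \in unitmx ->
        l1 != - (l1 + l2) -> l2 != - (l1 + l2) ->
        map_mx intr A =
          V3 *m diag3 (expR l1) (expR l2) (expR (- (l1 + l2))) *m invmx V3 ->
        let logA := V3 *m diag3 l1 l2 (- (l1 + l2)) *m invmx V3 in
        let J := fun t => Pmat V3 *m Kt l1 l2 t *m invmx (Pmat V3) in
        (forall u v : 'cV[R]_4,
           Pmat V3 *m brg l1 l2 u v = brG logA (Pmat V3 *m u) (Pmat V3 *m v))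
        /\ (forall t : R, 0 < t -> J t *m J t = - 1%:M)
        /\ (forall (x y : 'cV[R]_4) (k : 'I_4),
              nijenhuis (brG logA) (J t) x y k 0 @[t --> +oo] --> 0)).
Proof.
move=> d a b N.
have hd : l1 - l2 != 0 by rewrite subr_eq0.
split; [|split].
- move=> t ht.
  have ht0 : t != 0 by rewrite gt_eqF.
  split; first exact: Ksq.
  rewrite /N /d /a /b !Nform // /V1 /V2 !cv4_e0 !cv4_e1 !cv4_e2 !cv4_e3.
  rewrite !cv4Z !cv4N !cv4D.
  repeat split; apply: cv4_eq; rewrite ?mxE /=; field; by rewrite ?hd ?ht0.
- move=> x y k.
  apply: (@lim_inv R (V1 l1 l2 x y k 0) (V2 l1 l2 x y k 0)).
  near=> t.
  have ht : 0 < t by near: t; apply: nbhs_pinfty_gt; exact: real0.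
  have ht0 : t != 0 by rewrite gt_eqF.
  rewrite /N Nform //; symmetry; exact: addZE.
- move=> A V3 hdet hV hn1 hn2 hA logA J.
  have hP := @Pmat_unit R V3 hV.
  have JP : forall (t : R) (z : 'cV[R]_4), J t *m (Pmat V3 *m z) = Pmat V3 *m (Kt l1 l2 t *m z).
    by move=> t z; rewrite /J /= -!mulmxA mulKmx.
  split; [|split].
  + by move=> u v; apply: brG_brg.
  + move=> t ht.
    have ht0 : t != 0 by rewrite gt_eqF.
    rewrite /J /= -!mulmxA mulKmx // (mulmxA (Kt l1 l2 t)) Ksq //.
    by rewrite mulNmx mul1mx mulmxN mulmxV.
  + move=> x y k.
    rewrite -[x](mulKVmx hP) -[y](mulKVmx hP).
    set x' := invmx (Pmat V3) *m x; set y' := invmx (Pmat V3) *m y.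
    have key : forall t, nijenhuis (brG logA) (J t) (Pmat V3 *m x') (Pmat V3 *m y') =
        Pmat V3 *m nijenhuis (brg l1 l2) (Kt l1 l2 t) x' y'.
      move=> t; rewrite /nijenhuis !JP /logA -!brG_brg // !JP.
      by rewrite !mulmxBr.
    apply: (@lim_inv R ((Pmat V3 *m V1 l1 l2 x' y') k 0)
                    ((Pmat V3 *m V2 l1 l2 x' y') k 0)).
    near=> t.
    have ht : 0 < t by near: t; apply: nbhs_pinfty_gt; exact: real0.
    have ht0 : t != 0 by rewrite gt_eqF.
    rewrite key Nform // mulmxDr -!scalemxAr; symmetry; exact: addZE.
Unshelve. all: by end_near.
Qed.
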